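(* Let $n\ge 2$ be an integer, $k=3$ and $\alpha=(\tfrac12,\tfrac12,\tfrac1n)$. Let $f(g)$ be the number of $\alpha$-communal triples with entries summing to $g$. Then \[ f(g)=\tfrac12\left(\lfloor g/n\rfloor+1\right)\left(\lfloor g/n\rfloor+\epsilon_g\right),\quad \epsilon_g=\begin{cases}2 & g \text{ even},\\ 0 & g\text{ odd},\end{cases} \] and the generating function $F(x)=\sum_{g\ge0}f(g)x^g$ is \[ F(x)=\frac{1+2x^{n+1}+x^{2n}}{(1-x^2)(1-x^n)(1-x^{2n})}\ \text{ if } n \text{ is odd},\qquad F(x)=\frac{1+x^{n+1}}{(1-x^2)(1-x^n)^2}\ \text{ if } n\text{ is even}. \]
   Context: A triple $[g_1,g_2,g_3]$ of integers is $\alpha$-communal if $0\le g_i\le\alpha_i(g_1+g_2+g_3)$ for $i=1,2,3$. *)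

(* Defs.v *)
From HB Require Import structures.
From mathcomp Require Import all_boot all_order all_algebra.
Set Implicit Arguments. Unset Strict Implicit. Unset Printing Implicit Defensive.
Import Order.TTheory GRing.Theory Num.Theory.
Local Open Scope ring_scope.

Definition communal (alpha : rat * rat * rat) (g1 g2 g3 : int) : bool :=
  let s := (g1 + g2 + g3)%:~R : rat in
  [&& 0 <= g1, 0 <= g2, 0 <= g3,
      g1%:~R <= alpha.1.1 * s, g2%:~R <= alpha.1.2 * s & g3%:~R <= alpha.2 * s].

(* Number of alpha-communal integer triples with entries summing to g.
   Any such triple has 0 <= g_i <= g, so we may range over 'I_(g+1)^3. *)
Definition ncommunal (alpha : rat * rat * rat) (g : nat) : nat :=
  #|[set t : 'I_g.+1 * 'I_g.+1 * 'I_g.+1 |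
      ((t.1.1 + t.1.2 + t.2)%N == g) &&
      communal alpha (t.1.1 : nat)%:Z (t.1.2 : nat)%:Z (t.2 : nat)%:Z]|.

Definition gf_trunc (f : nat -> nat) (N : nat) : {poly int} :=
  \sum_(g < N) (f g)%:Z *: 'X^g.

(* Formal power series identity  sum_g f(g) x^g = P / Q  (Q(0) = 1),
   stated as: (sum_g f(g) x^g) * Q = P as formal power series, i.e. all
   coefficients agree, checked on every truncation. *)
Definition gf_is (f : nat -> nat) (P Q : {poly int}) : Prop :=
  forall N i : nat, (i < N)%N -> (gf_trunc f N * Q)`_i = P`_i.

(* Main.v *)
Require Import Defs.
From HB Require Import structures.
From mathcomp Require Import all_boot all_order all_algebra.
From mathcomp Require Import zify ring lra.
Import Order.TTheory GRing.Theory Num.Theory.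
Local Open Scope ring_scope.

Lemma communalE (n : nat) (hn : (0 < n)%N) (a b c : nat) :
  communal (1/2, 1/2, 1/n%:R) a%:Z b%:Z c%:Z =
  [&& (a * 2 <= a + b + c)%N, (b * 2 <= a + b + c)%N & (c * n <= a + b + c)%N].
Proof.
rewrite /communal /= -!PoszD !pmulrn.
rewrite !mul1r ![_^-1 * _]mulrC.
rewrite !ler_pdivlMr ?ltr0n // -!natrM !ler_nat.
by [].
Qed.
Lemma cardE3 (P : nat -> nat -> nat -> bool) g :
  #|[set t : 'I_g.+1 * 'I_g.+1 * 'I_g.+1 | P t.1.1 t.1.2 t.2]| =
  (\sum_(a < g.+1) \sum_(b < g.+1) \sum_(c < g.+1) (P a b c : nat))%N.
Proof.
rewrite pair_bigA pair_bigA /= -sum1_card big_mkcond /=.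
by apply: eq_bigr => t _; rewrite inE; case: (P _ _ _).
Qed.
Lemma sum_pick m k (R : bool) : (k < m)%N ->
  (\sum_(b < m) (((b:nat) == k) && R : nat) = R)%N.
Proof.
move=> hk; rewrite (bigD1 (Ordinal hk)) //= eqxx big1 ?addn0 // => i hi.
have -> : ((i : nat) == k) = false.
  by apply/negbTE; apply: contra hi => /eqP e; apply/eqP/val_inj.
by [].
Qed.

Lemma sum_range m lo hi :
  (\sum_(i < m) ((lo <= i < hi)%N : nat) = minn m hi - lo)%N.
Proof.
elim: m => [|m IH]; first by rewrite big_ord0; lia.
rewrite big_ord_recr /= IH; case: (boolP (lo <= m < hi)%N) => h /=; lia.
Qed.
Lemma sum_lin m o : (o <= 1)%N ->
  ((\sum_(c < m) (c + 1 - o)) * 2 = m * (m + 1 - o * 2))%N.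
Proof.
move=> ho; elim: m => [|m IH]; first by rewrite big_ord0.
rewrite big_ord_recr /= mulnDl IH; nia.
Qed.

Lemma countE (n g : nat) (hn : (2 <= n)%N) :
  (ncommunal (1/2, 1/2, 1/n%:R) g * 2 =
   (g %/ n).+1 * ((g %/ n).+2 - (g %% 2) * 2))%N.
Proof.
have n0 : (0 < n)%N by lia.
rewrite /ncommunal.
rewrite (cardE3 (fun a b c => ((a + b + c)%N == g) && communal (1/2, 1/2, 1/n%:R) a%:Z b%:Z c%:Z)).
under eq_bigr => a _ do under eq_bigr => b _ do under eq_bigr => c _ do rewrite communalE //.
under eq_bigr => a _ do rewrite exchange_big.
rewrite exchange_big /=.
have step : forall c : 'I_g.+1,
   (\sum_(a < g.+1) \sum_(b < g.+1)
     ([&& a + b + c == g, a * 2 <= a + b + c, b * 2 <= a + b + c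
        & c * n <= a + b + c]%N : nat) =
    if (c < (g %/ n).+1)%N then c + 1 - g %% 2 else 0)%N.
  move=> c.
  have E1 : forall a b : nat, [&& a + b + c == g, a * 2 <= a + b + c, b * 2 <= a + b + c
        & c * n <= a + b + c]%N =
       (((b : nat) == g - (a + c)) && [&& a+c <= g, a*2 <= g , (g - (a+c))*2 <= g & c*n <= g])%N.
    by move=> a b; lia.
  under eq_bigr => a _ do under eq_bigr => b _ do rewrite E1.
  under eq_bigr => a _ do rewrite sum_pick ?ltnS ?leq_subr //.
  have c2 : (c * 2 <= c * n)%N by rewrite leq_mul2l hn orbT.
  rewrite ltnS leq_divRL //.
  have E2 : forall a : nat, [&& a+c <= g, a*2 <= g , (g - (a+c))*2 <= g & c*n <= g]%N =
       ((c * n <= g) && (g - c - g %/ 2 <= a < g %/ 2 + 1))%N.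
    by move=> a; lia.
  under eq_bigr => a _ do rewrite E2.
  case: (boolP (c * n <= g)%N) => h /=.
    rewrite sum_range; lia.
  by rewrite big1.
rewrite (eq_bigr _ (fun c _ => step c)) -big_mkcond /=.
rewrite -(big_ord_widen _ (fun c => c + 1 - g %% 2)%N); last first.
  by rewrite ltnS leq_div.
rewrite sum_lin //; lia.
Qed.
Lemma fE (n g : nat) (hn : (2 <= n)%N) :
  (ncommunal (1/2, 1/2, 1/n%:R) g * 2 =
   (g %/ n).+1 * (g %/ n + (if odd g then 0 else 2)))%N.
Proof. rewrite countE // modn2; case: (odd g) => /=; nia. Qed.

Lemma part1 (n g : nat) (hn : (2 <= n)%N) :
  (ncommunal (1/2, 1/2, 1/n%:R) g)%:R = (1 / 2 : rat) * ((g %/ n)%N%:R + 1)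
                  * ((g %/ n)%N%:R + (if odd g then 0 else 2)).
Proof.
have := congr1 (fun m : nat => m%:R : rat) (@fE n g hn).
rewrite natrM natrM natrD /= => h.
have -> : (ncommunal (1/2, 1/2, 1/n%:R) g)%:R = (ncommunal (1/2, 1/2, 1/n%:R) g)%:R * 2 / 2 :> rat.
  by rewrite mulfK.
rewrite h; case: (odd g) => /=; rewrite -addn1 natrD /=; by field.
Qed.
Lemma trunc_coef (f : nat -> nat) N k :
  (gf_trunc f N)`_k = if (k < N)%N then (f k)%:Z else 0.
Proof.
rewrite /gf_trunc coef_sum.
under eq_bigr => g _ do rewrite coefZ coefXn.
case: ltnP => hk.
  rewrite (bigD1 (Ordinal hk)) //= eqxx mulr1 big1 ?addr0 // => j hj.
  have -> : (k == j) = false.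
    by apply/negbTE; apply: contra hj => /eqP e; apply/eqP/val_inj.
  by rewrite mulr0.
rewrite big1 // => j _; have -> : (k == j) = false by apply/negbTE; rewrite neq_ltn (leq_trans (ltn_ord j) hk) orbT.
by rewrite mulr0.
Qed.

Definition dlt (e : nat) (u : nat -> int) (i : nat) : int :=
  u i - (if (e <= i)%N then u (i - e)%N else 0).

Lemma coef_dlt (p : {poly int}) u N e :
  (forall i, (i < N)%N -> p`_i = u i) ->
  forall i, (i < N)%N -> (p * (1 - 'X^e))`_i = dlt e u i.
Proof.
move=> h i hi; rewrite mulrBr mulr1 coefB coefMXn /dlt h //.
case: ltnP => hie; first by [].
by rewrite h //; apply: leq_ltn_trans hi; apply: leq_subr.
Qed.

Lemma qB (n i : nat) : (0 < n)%N -> (n <= i)%N -> ((i - n) %/ n = i %/ n - 1)%N.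
Proof.
move=> n0 h; have := divnMDl 1 (i - n) n0; rewrite mul1n subnKC //; lia.
Qed.
Lemma fzE n j (hn : (2 <= n)%N) : (ncommunal (1/2, 1/2, 1/n%:R) j)%:Z * 2 =
   ((j %/ n)%N%:Z + 1) * ((j %/ n)%N%:Z + (if odd j then 0 else 2)).
Proof.
have := @fE n j hn; case: (odd j) => /= h; lia.
Qed.

Section GF.
Variable n : nat.
Hypothesis hn : (2 <= n)%N.
Variable fz : nat -> int.
Hypothesis fzE : forall j, fz j * 2 = ((j %/ n)%N%:Z + 1) * ((j %/ n)%N%:Z + (if odd j then 0 else 2)).

Lemma n0 : (0 < n)%N. Proof. lia. Qed.

Lemma Geven i : ~~ odd n -> dlt n (dlt n fz) i = if (i < n)%N && odd i then 0 else 1.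
Proof.
move=> hev; rewrite /dlt.
have e0 := fzE i.
case: (ssrnat.leqP n i) => h1.
  have e1 := fzE (i - n)%N.
  rewrite (qB _ _ n0 h1) oddB // (negbTE hev) addbF in e1.
  have q1 : (1 <= i %/ n)%N by rewrite leq_divRL ?n0 // mul1n.
  case: (ssrnat.leqP n (i - n)%N) => h2.
    have e2 := fzE (i - n - n)%N.
    rewrite (qB _ _ n0 h2) (qB _ _ n0 h1) oddB // oddB // (negbTE hev) !addbF in e2.
    have q2 : (2 <= i %/ n)%N by rewrite leq_divRL ?n0 //; lia.
    rewrite andFb; case: (odd i) in e0 e1 e2 *; nia.
  have q2 : (i %/ n < 2)%N by rewrite ltn_divLR ?n0 //; lia.
  rewrite andFb; case: (odd i) in e0 e1 *; nia.
have q0 : (i %/ n = 0)%N by rewrite divn_small.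
rewrite q0 in e0 *; case: (odd i) in e0 *; rewrite /=; lia.
Qed.

Lemma G1odd i : odd n -> dlt n fz i = if odd i then 0 else 2 * (i %/ n)%N%:Z + 1.
Proof.
move=> hod; rewrite /dlt.
have e0 := fzE i.
case: (ssrnat.leqP n i) => h1.
  have e1 := fzE (i - n)%N.
  rewrite (qB _ _ n0 h1) oddB // hod addbT in e1.
  have q1 : (1 <= i %/ n)%N by rewrite leq_divRL ?n0 // mul1n.
  case: (odd i) in e0 e1 *; rewrite /= in e0 e1 *; nia.
have q0 : (i %/ n = 0)%N by rewrite divn_small.
rewrite q0 in e0 *; case: (odd i) in e0 *; rewrite /=; lia.
Qed.

Lemma G2odd i : odd n -> dlt (n.*2) (dlt n fz) i =
  if odd i then 0 else if (i %/ n == 0)%N then 1 else if (i %/ n == 1)%N then 3 else 4.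
Proof.
move=> hod; rewrite {1}/dlt !G1odd //.
case: (ssrnat.leqP n.*2 i) => h1.
  have h0 : (n <= i)%N by lia.
  have h2 : (n <= i - n)%N by lia.
  have -> : (i - n.*2 = i - n - n)%N by lia.
  rewrite (qB _ _ n0 h2) (qB _ _ n0 h0) oddB // oddB // hod addbT addbT negbK.
  have q2 : (2 <= i %/ n)%N by rewrite leq_divRL ?n0 //; lia.
  case: (odd i) => /=; first by rewrite subr0.
  have -> : (i %/ n == 0)%N = false by lia.
  have -> : (i %/ n == 1)%N = false by lia.
  lia.
have q2 : (i %/ n < 2)%N by rewrite ltn_divLR ?n0 //; lia.
case: (odd i) => /=; first by rewrite subr0.
case: (i %/ n)%N q2 => [|[|m]] //= _; lia.
Qed.

Lemma Feven i : ~~ odd n -> dlt 2 (dlt n (dlt n fz)) i =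
  (if i == 0 then 1 else 0) + (if i == n.+1 then 1 else 0).
Proof.
move=> hev; rewrite {1}/dlt !Geven //.
have hn1 : odd n.+1 by rewrite /= hev.
case: (ssrnat.leqP 2 i) => h2.
  rewrite oddB // addbF.
  case: (boolP (odd i)) => oi; rewrite /= ?andbT ?andbF.
    have -> : (i == 0) = false by apply/negbTE; apply: contraTneq oi => ->.
    repeat case: ifP; lia.
  have -> : (i == n.+1) = false by apply/negbTE; apply: contraNneq oi => ->.
  repeat case: ifP; lia.
case: i h2 => [|[|i]] //= _; repeat case: ifP; lia.
Qed.

Lemma q0E j : (j %/ n == 0)%N = (j < n)%N.
Proof. by rewrite -leqn0 -ltnS ltn_divLR ?n0 // mul1n. Qed.
Lemma q1E j : (j %/ n == 1)%N = (n <= j < n.*2)%N.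
Proof.
rewrite eqn_leq -ltnS ltn_divLR ?n0 // leq_divRL ?n0 // mul1n -muln2 mulnC andbC.
by [].
Qed.

Lemma Fodd i : odd n -> dlt 2 (dlt (n.*2) (dlt n fz)) i =
  (if i == 0 then 1 else 0) + (if i == n.+1 then 2 else 0) + (if i == n.*2 then 1 else 0).
Proof.
move=> hod; rewrite {1}/dlt !G2odd // !q0E !q1E.
have hn2 : (n %% 2 = 1)%N by rewrite modn2 hod.
case: (ssrnat.leqP 2 i) => h2.
  rewrite oddB // addbF.
  case: (boolP (odd i)) => oi; rewrite /=.
    have -> : (i == 0) = false by apply/negbTE; apply: contraTneq oi => ->.
    have -> : (i == n.*2) = false by apply/negbTE; apply: contraTneq oi => ->; rewrite odd_double.
    have -> : (i == n.+1) = false by apply/negbTE; apply: contraTneq oi => ->; rewrite /= hod.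
    lia.
  have hi2 : (i %% 2 = 0)%N by rewrite modn2 (negbTE oi).
  repeat case: ifP; lia.
case: i h2 => [|[|i]] //= _; repeat case: ifP; lia.
Qed.
End GF.

Theorem mainTheorem11 (n : nat) (hn : (2 <= n)%N) :
  let alpha : rat * rat * rat := (1 / 2, 1 / 2, 1 / n%:R) in
  let f := ncommunal alpha in
  (forall g : nat,
     (f g)%:R = (1 / 2 : rat) * ((g %/ n)%N%:R + 1)
                  * ((g %/ n)%N%:R + (if odd g then 0 else 2))) /\
  (odd n ->
     gf_is f (1 + 2%:R *: 'X^(n.+1) + 'X^(n.*2))
             ((1 - 'X^2) * (1 - 'X^n) * (1 - 'X^(n.*2)))) /\
  (~~ odd n ->
     gf_is f (1 + 'X^(n.+1))
             ((1 - 'X^2) * (1 - 'X^n) ^+ 2)).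
Proof.
move=> alpha f; rewrite /f /alpha.
split; first by move=> g; exact: part1.
have FE := fun j => @fzE n j hn.
have h0 : forall N j, (j < N)%N -> (gf_trunc (ncommunal (1/2, 1/2, 1/n%:R)) N)`_j =
    (fun j => (ncommunal (1/2, 1/2, 1/n%:R) j)%:Z) j.
  by move=> N j hj; rewrite trunc_coef hj.
split.
  move=> hod N i hi.
  have -> : forall p : {poly int}, p * ((1 - 'X^2) * (1 - 'X^n) * (1 - 'X^(n.*2))) =
     p * (1 - 'X^n) * (1 - 'X^(n.*2)) * (1 - 'X^2) by move=> p; ring.
  have h1 := coef_dlt _ _ _ n (h0 N).
  have h2 := coef_dlt _ _ _ n.*2 h1.
  have h3 := coef_dlt _ _ _ 2 h2.
  rewrite h3 // (@Fodd n hn _ FE) // !coefD coef1 coefZ !coefXn.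
  by do 3 case: eqP.
move=> hev N i hi.
have -> : forall p : {poly int}, p * ((1 - 'X^2) * (1 - 'X^n) ^+ 2) =
   p * (1 - 'X^n) * (1 - 'X^n) * (1 - 'X^2) by move=> p; ring.
have h1 := coef_dlt _ _ _ n (h0 N).
have h2 := coef_dlt _ _ _ n h1.
have h3 := coef_dlt _ _ _ 2 h2.
rewrite h3 // (@Feven n hn _ FE) // !coefD coef1 !coefXn.
by do 2 case: eqP.
Qed.
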